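(* Let $T>0$ and let $\Gamma:\Delta_T\to\mathbb{R}_+$ be a double kernel that preserves nonnegativity on $[0,T]$ and such that $\Gamma(s,s)=\gamma>0$ is constant for $s\in[0,T]$. Then the double kernel $\tilde\Gamma(t,s)=\Gamma(T-s,T-t)$, $(t,s)\in\Delta_T$, preserves nonnegativity on $[0,T]$.
   Context: $\Delta_T=\{(t,s):0\le s\le t\le T\}$. $\Gamma:\Delta_T\to\mathbb{R}_+$ preserves nonnegativity on $[0,T]$ if for any $K\in\mathbb{N}^*$, $x_1,\dots,x_K\in\mathbb{R}$ and $0\le t_1<\dots<t_K<T$ with $\sum_{k'=1}^kx_{k'}\Gamma(t_k,t_{k'})\ge0$ for all $k$, one has $\sum_{k:t_k\le t}x_k\Gamma(t,t_k)\ge0$ for all $t\in[0,T]$. *)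

(* Defs.v *)
From HB Require Import structures.
From mathcomp Require Import all_boot all_order all_algebra.
From mathcomp Require Import reals.
Set Implicit Arguments. Unset Strict Implicit. Unset Printing Implicit Defensive.
Import Order.TTheory GRing.Theory Num.Theory.
Local Open Scope ring_scope.

(* A double kernel is modelled as a function G : R -> R -> R; only its values
   on Delta_T = {(t,s) : 0 <= s <= t <= T} matter. *)

Definition nonneg_on_Delta {R : realType} (T : R) (G : R -> R -> R) : Prop :=
  forall t s : R, 0 <= s -> s <= t -> t <= T -> 0 <= G t s.

(* Preservation of nonnegativity on [0,T]. Indices k = 1..K of the paper are
   represented by k : 'I_K (i.e. 0..K-1). *)
Definition preserves_nonneg {R : realType} (T : R) (G : R -> R -> R) : Prop :=
  forall (K : nat) (x : 'I_K -> R) (tk : 'I_K -> R),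
    (0 < K)%N ->
    (forall i j : 'I_K, (i < j)%N -> tk i < tk j) ->
    (forall i : 'I_K, 0 <= tk i /\ tk i < T) ->
    (forall k : 'I_K, 0 <= \sum_(k' < K | (k' <= k)%N) x k' * G (tk k) (tk k')) ->
    forall t : R, 0 <= t -> t <= T ->
      0 <= \sum_(k < K | tk k <= t) x k * G t (tk k).

(* Main.v *)
Require Import Defs.
From HB Require Import structures.
From mathcomp Require Import all_boot all_order all_algebra.
From mathcomp Require Import reals.
From mathcomp Require Import zify ring lra.
Import Order.TTheory GRing.Theory Num.Theory.
Local Open Scope ring_scope.

Lemma widen_le {R : realType} (F : nat -> R) n m a :
  (a < n)%N -> (a < m)%N ->
  \sum_(i < n | (i <= a)%N) F i = \sum_(i < m | (i <= a)%N) F i.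
Proof.
move=> an am.
have h : forall p, (a < p)%N -> \sum_(i < p | (i <= a)%N) F i = \sum_(i < a.+1) F i.
  move=> p ap; rewrite (big_ord_widen_cond _ (fun _ => true) F ap).
  by apply: eq_bigl => i /=.
by rewrite h // h.
Qed.

Lemma rev_sum {R : realType} (F : nat -> R) j M a : (a <= j)%N -> (a < M)%N ->
  \sum_(a' < M | (a' <= a)%N) F (j - a')%N = \sum_(i < j.+1 | (j - a <= i)%N) F i.
Proof.
move=> aj aM.
rewrite [RHS](reindex_inj rev_ord_inj) /=.
rewrite (@widen_le _ (fun a' => F (j - a')%N) _ _ _ aM (_ : (a < j.+1)%N)); last by lia.
apply: eq_big => i /=.
  have := ltn_ord i; rewrite subSS => ?; apply/idP/idP => ?; lia.
by rewrite subSS.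
Qed.
Lemma core {R : realType} (T : R) (G : R -> R -> R) (gamma : R) (j : nat) (s : nat -> R) :
  preserves_nonneg T G -> 0 < gamma ->
  (forall u : R, 0 <= u -> u <= T -> G u u = gamma) ->
  (forall a b, (a < b)%N -> (b <= j)%N -> s a < s b) ->
  (forall a, (a <= j)%N -> 0 <= s a) ->
  (forall a, (a <= j)%N -> s a <= T) ->
  exists r : nat -> R, r j = 1 /\ forall k, (k < j)%N -> r k <= 0 /\
     \sum_(i < j.+1 | (k <= i)%N) r i * G (T - s k) (T - s i) = 0.
Proof.
move=> hpres hg hdiag hinc hs0 hsT.
suff: forall m, (m <= j)%N -> exists r : nat -> R, r j = 1 /\ forall k, (j - m <= k)%N -> (k < j)%N -> r k <= 0 /\
     \sum_(i < j.+1 | (k <= i)%N) r i * G (T - s k) (T - s i) = 0.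
  move=> /(_ j (leqnn j)) [r [rj hr]]; exists r; split => // k kj.
  by apply: hr => //; lia.
elim=> [|m IH] mj.
  by exists (fun _ => 1); split => // k; lia.
have [r [rj hr]] := IH (ltnW mj).
set k0 := (j - m.+1)%N.
set S := \sum_(i < j.+1 | (k0 < i)%N) r i * G (T - s k0) (T - s i).
have Sge : 0 <= S.
  have jk0 : (j - k0)%N = m.+1 by rewrite /k0; lia.
  have := hpres m.+1 (fun a => r (j - a)%N) (fun a => T - s (j - a)%N) (ltn0Sn m).
  have hinc' : forall a b : 'I_m.+1, (a < b)%N -> T - s (j - a)%N < T - s (j - b)%N.
    move=> a b ab; have := ltn_ord b => bm.
    have : s (j - b)%N < s (j - a)%N by apply: hinc; lia.
    lra.
  move=> /(_ hinc'); clear hinc'.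
  have hrange : forall a : 'I_m.+1, 0 <= T - s (j - a)%N /\ T - s (j - a)%N < T.
    move=> a; have := ltn_ord a => am.
    have : s 0%N < s (j - a)%N by apply: hinc; lia.
    have : s (j - a)%N <= T by apply: hsT; lia.
    have : 0 <= s 0%N by apply: hs0; lia.
    move=> *; split; lra.
  move=> /(_ hrange); clear hrange.
  have hyp : forall k : 'I_m.+1, 0 <= \sum_(k' < m.+1 | (k' <= k)%N)
      r (j - k')%N * G (T - s (j - k)%N) (T - s (j - k')%N).
    move=> k; have := ltn_ord k => km.
    case: (posnP k) => [k0'|kpos].
      rewrite (big_pred1 ord0); last first.
        by move=> a /=; rewrite k0' leqn0 -val_eqE.
      rewrite /= k0' subn0 rj mul1r hdiag; first exact: ltW.
        by have := hsT j (leqnn j); lra.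
      by have := hs0 j (leqnn j); lra.
    rewrite (@rev_sum _ (fun i => r i * G (T - s (j - k)%N) (T - s i)) j m.+1 k); last 2 first.
      by lia. by [].
    have hk1 : (j - m <= j - k)%N by lia.
    have hk2 : (j - k < j)%N by lia.
    by have [_ ->] := hr _ hk1 hk2.
  move=> /(_ hyp); clear hyp.
  move=> /(_ (T - s k0)).
  have h1 : s k0 <= T by apply: hsT; lia.
  have h2 : 0 <= s k0 by apply: hs0; lia.
  have h4 : 0 <= T - s k0 by lra.
  have h5 : T - s k0 <= T by lra.
  move=> /(_ h4 h5).
  have -> : \sum_(k < m.+1 | T - s (j - k)%N <= T - s k0) r (j - k)%N * G (T - s k0) (T - s (j - k)%N)
        = \sum_(k < m.+1 | (k <= m)%N) r (j - k)%N * G (T - s k0) (T - s (j - k)%N).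
    apply: eq_bigl => a; have := ltn_ord a => am.
    have h3 : s k0 < s (j - a)%N by apply: hinc; lia.
    apply/idP/idP => _; [lia | lra].
  rewrite (@rev_sum _ (fun i => r i * G (T - s k0) (T - s i)) j m.+1 m); last 2 first.
    by lia. by [].
  rewrite /S; congr (_ <= _); apply: eq_bigl => i; apply/idP/idP; rewrite /k0; lia.
exists (fun i => if i == k0 then - S / gamma else r i); split.
  by rewrite ifN //; apply/eqP; rewrite /k0; lia.
move=> k k0k kj.
case: (eqVneq k k0) => [->|kk0].
  split.
    by rewrite mulNr oppr_le0 divr_ge0 // ltW.
  have k0j : (k0 < j.+1)%N by lia.
  rewrite (bigD1 (Ordinal k0j)) //=.
  rewrite eqxx hdiag; last 2 first.
    have : s k0 <= T by apply: hsT; lia.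
    lra.
    have : 0 <= s k0 by apply: hs0; lia.
    lra.
  rewrite mulfVK ?gt_eqF //; apply/eqP; rewrite addrC subr_eq0 /S; apply/eqP.
  apply: eq_big => i.
    by rewrite -val_eqE /= ltn_neqAle andbC eq_sym.
  by move=> /andP[_]; rewrite -val_eqE /= => ki; rewrite ifN.
have k1 : (j - m <= k)%N by lia.
have [hr1 hr2] := hr k k1 kj.
split => //.
rewrite -[X in _ = X]hr2; apply: eq_bigr => i ki.
by rewrite ifN //; apply/eqP; lia.
Qed.

Lemma identity {R : realType} (j : nat) (r x : nat -> R) (B : nat -> nat -> R) :
  \sum_(i < j.+1) r i * \sum_(k < j | (k <= i)%N) x k * B i k =
  \sum_(k < j) x k * \sum_(i < j.+1 | (k <= i)%N) r i * B i k.
Proof.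
transitivity (\sum_(i < j.+1) \sum_(k < j) (if (k <= i)%N then r i * (x k * B i k) else 0) : R).
  by apply: eq_bigr => i _; rewrite big_distrr /= big_mkcond.
rewrite exchange_big; apply eq_bigr => k _.
rewrite big_distrr [RHS]big_mkcond; apply: eq_bigr => i _.
by case: ifP => _ //=; rewrite mulrCA.
Qed.

Theorem corollaryC (R : realType) (T : R) (G : R -> R -> R) (gamma : R) :
  0 < T ->
  nonneg_on_Delta T G ->
  preserves_nonneg T G ->
  0 < gamma ->
  (forall s : R, 0 <= s -> s <= T -> G s s = gamma) ->
  preserves_nonneg T (fun t s => G (T - s) (T - t)).
Proof.
move=> hT _ hpres hg hdiag K x tk K0 hinc hrange hyp t t0 tT.
have mono : forall a b : 'I_K, (tk a <= tk b) = (a <= b)%N.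
  move=> a b; case: (leqP a b) => ab.
    case: (eqVneq a b) => [->|nab]; first exact: lexx.
    by apply: ltW; apply: hinc; rewrite ltn_neqAle ab andbT -val_eqE in nab *.
  by apply/negbTE; rewrite -ltNge; apply: hinc.
case: (boolP [exists k, tk k == t]) => [/existsP [k /eqP tkt]|/existsPn nott].
  rewrite -tkt (eq_bigl (fun k' : 'I_K => (k' <= k)%N)); first exact: hyp k.
  by move=> k'; rewrite /= mono.
case: K K0 x tk hinc hrange hyp mono nott => // K' _ x tk hinc hrange hyp mono nott.
set j := (\max_(k : 'I_K'.+1 | (tk k <= t)%R) k.+1)%N.
have jK : (j <= K'.+1)%N by apply/bigmax_leqP => k _; exact: ltn_ord.
have hj : forall k : 'I_K'.+1, (tk k <= t) = (k < j)%N.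
  move=> k; apply/idP/idP => h.
    by rewrite /j; apply: (@leq_bigmax_cond _ (fun k => tk k <= t) (fun k : 'I_K'.+1 => k.+1) k h).
  apply/negP => /negP; rewrite -ltNge => tk_lt.
  have : (j <= k)%N.
    apply/bigmax_leqP => k1 hk1; rewrite ltnNge; apply/negP => kk1.
    have := mono k k1; rewrite kk1 => /idP hk; lra.
  lia.
pose x' n := x (inord n).
pose s n := if (n < j)%N then tk (inord n) else t.
have sk : forall k : 'I_K'.+1, (k < j)%N -> s k = tk k.
  by move=> k h; rewrite /s h inord_val.
have sj : s j = t by rewrite /s ltnn.
have hinc_s : forall a b, (a < b)%N -> (b <= j)%N -> s a < s b.
  move=> a b ab bj; have aj : (a < j)%N by lia.
  have aK : (a < K'.+1)%N by lia.
  rewrite /s aj; case: (ltnP b j) => bj'.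
    have bK : (b < K'.+1)%N by lia.
    by apply: hinc; rewrite !inordK.
  have tka : tk (inord a) <= t by rewrite hj inordK.
  by rewrite lt_neqAle tka andbT; exact: nott.
have hs0 : forall a, (a <= j)%N -> 0 <= s a.
  by move=> a _; rewrite /s; case: ifP => _; [exact: (hrange _).1 | exact: t0].
have hsT : forall a, (a <= j)%N -> s a <= T.
  by move=> a _; rewrite /s; case: ifP => _; [exact: ltW (hrange _).2 | exact: tT].
have [r [rj hr]] := @core _ T G gamma j s hpres hg hdiag hinc_s hs0 hsT.
have goalE : \sum_(k < K'.+1 | tk k <= t) x k * G (T - tk k) (T - t)
    = \sum_(k < j) x' k * G (T - s k) (T - s j).
  rewrite (@big_ord_widen_cond _ _ _ j K'.+1 xpredT (fun k => x' k * G (T - s k) (T - s j)) jK).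
  apply: eq_big => k; first by rewrite hj.
  by move=> hk; rewrite hj in hk; rewrite sk // sj /x' inord_val.
have hypE : forall i, (i < j)%N -> 0 <= \sum_(k < j | (k <= i)%N) x' k * G (T - s k) (T - s i).
  move=> i ij; have iK : (i < K'.+1)%N by lia.
  have := hyp (inord i).
  have si : s i = tk (inord i) by rewrite /s ij.
  rewrite (eq_big (fun k : 'I_K'.+1 => (k <= i)%N) (fun k : 'I_K'.+1 => x' k * G (T - s k) (T - s i))); last 2 first.
      by move=> k; rewrite /= inordK.
    move=> k; rewrite /= inordK // => ki; rewrite si sk; last by lia.
    by rewrite /x' inord_val.
  by rewrite (@widen_le _ (fun k => x' k * G (T - s k) (T - s i)) K'.+1 j i iK ij).
have idE := @identity _ j r x' (fun i k => G (T - s k) (T - s i)).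
rewrite [X in _ = X]big1 in idE; last first.
  by move=> k _; rewrite (hr k (ltn_ord k)).2 mulr0.
rewrite big_ord_recr /= rj mul1r in idE.
rewrite [X in _ + X = _](eq_bigl xpredT) in idE; last first.
  by move=> k; rewrite /= (ltnW (ltn_ord k)).
rewrite goalE.
set Z := \sum_(k < j) _.
set SY := \sum_(i < j) _ in idE.
have : 0 <= - SY.
  rewrite /SY -sumrN; apply: sumr_ge0 => i _; rewrite -mulNr; apply: mulr_ge0.
    by rewrite oppr_ge0; exact: (hr i (ltn_ord i)).1.
  exact: hypE.
have : SY + Z = 0 by rewrite -idE.
lra.
Qed.
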